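(* Let $N,d\ge1$, $\lambda,\tau>0$, and let $\psi:[0,\infty)\to(0,\infty)$ be positive, nonincreasing, differentiable with $\psi(r)\le1$ for all $r\ge0$. Let $(x_i,v_i)_{i=1}^N$ solve $$\dot x_i(t)=v_i(t),\qquad \dot v_i(t)=\frac{\lambda}{N}\sum_{j=1}^N\psi(|x_i(t-\tau)-x_j(t-\tau)|)\,(v_j(t-\tau)-v_i(t-\tau)),\qquad t>0,$$ with initial data $(x_i,v_i)=(x_i^0,v_i^0)$ on $[-\tau,0]$, $(x_i^0,v_i^0)\in C([-\tau,0];\mathbb{R}^{2d})\cap C^1((-\tau,0);\mathbb{R}^{2d})$. Then $$\frac{d}{dt}V(t)\le 2\lambda\big(V(t)+V(t-\tau)\big)\qquad\text{for all }t>0.$$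
   Context: $V(t):=\frac12\sum_{i,j=1}^N|v_i(t)-v_j(t)|^2$ for $t\ge-\tau$. *)

(* Defs.v *)
From HB Require Import structures.
From mathcomp Require Import all_boot all_order all_algebra.
From mathcomp Require Import all_classical all_reals all_analysis.
Set Implicit Arguments. Unset Strict Implicit. Unset Printing Implicit Defensive.
Import Order.TTheory GRing.Theory Num.Theory.
Import numFieldNormedType.Exports.
Local Open Scope ring_scope.

Definition sqnorm (R : realType) (d : nat) (a : 'I_d -> R) : R :=
  \sum_(k < d) a k ^+ 2.

Definition enorm (R : realType) (d : nat) (a : 'I_d -> R) : R :=
  Num.sqrt (sqnorm a).

(* V(t) = 1/2 sum_{i,j} |v_i(t) - v_j(t)|^2, where v i k t is the k-th
   coordinate of v_i(t). *)
Definition Vfun (R : realType) (N d : nat) (v : 'I_N -> 'I_d -> R -> R) (t : R) : R :=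
  2^-1 * \sum_(i < N) \sum_(j < N) sqnorm (fun k => v i k t - v j k t).

(* Main.v *)
Require Import Defs.
From HB Require Import structures.
From mathcomp Require Import all_boot all_order all_algebra.
From mathcomp Require Import all_classical all_reals all_analysis.
From mathcomp Require Import ring lra.
Import Order.TTheory GRing.Theory Num.Theory.
Import numFieldNormedType.Exports.
Local Open Scope classical_set_scope.
Local Open Scope ring_scope.

Lemma Vderiv (R : realType) (N d : nat) (v : 'I_N -> 'I_d -> R -> R)
  (a : 'I_N -> 'I_d -> R) (t : R)
  (h : forall i k, is_derive t 1 (v i k) (a i k)) :
  is_derive t 1 (Vfun v)
   (2^-1 * \sum_(i < N) \sum_(j < N) \sum_(k < d)
      (2 * (v i k t - v j k t) * (a i k - a j k))).
Proof.
have hX : forall i j k, is_derive t 1 (fun s => (v i k s - v j k s) ^+ 2)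
   (2 * (v i k t - v j k t) * (a i k - a j k)).
  move=> i j k.
  have := is_deriveX 2 (is_deriveB (h i k) (h j k)).
  have -> : (v i k - v j k) ^+ 2 = (fun s => (v i k s - v j k s) ^+ 2).
    by apply/funext => s; rewrite exprfctE.
  by move=> H; apply: (is_derive_eq H); rewrite /= expr1.
have hS : is_derive t 1 (\sum_(i < N) \sum_(j < N) \sum_(k < d)
             (fun s => (v i k s - v j k s) ^+ 2))
    (\sum_(i < N) \sum_(j < N) \sum_(k < d)
      (2 * (v i k t - v j k t) * (a i k - a j k))).
  apply: is_derive_sum => i; apply: is_derive_sum => j; exact: is_derive_sum.
have := is_deriveZ (2^-1) hS.
have -> : (2^-1 \*: \sum_(i < N) \sum_(j < N) \sum_(k < d)
             (fun s => (v i k s - v j k s) ^+ 2)) = Vfun v.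
  apply/funext => s; rewrite /Vfun /= !fct_sumE; congr (_ * _).
  apply: eq_bigr => i _; rewrite fct_sumE; apply: eq_bigr => j _.
  by rewrite fct_sumE /sqnorm.
by [].
Qed.

Section Sums.
Variables (R : realType) (N d : nat).
Implicit Types (F G : 'I_N -> 'I_N -> 'I_d -> R).

Lemma sum3D F G : \sum_(i < N) \sum_(j < N) \sum_(k < d) (F i j k + G i j k) =
  \sum_(i < N) \sum_(j < N) \sum_(k < d) F i j k +
  \sum_(i < N) \sum_(j < N) \sum_(k < d) G i j k.
Proof.
rewrite -big_split; apply: eq_bigr => i _; rewrite -big_split.
by apply: eq_bigr => j _; rewrite -big_split.
Qed.

Lemma sum3Z (c : R) F : \sum_(i < N) \sum_(j < N) \sum_(k < d) (c * F i j k) =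
  c * \sum_(i < N) \sum_(j < N) \sum_(k < d) F i j k.
Proof.
rewrite mulr_sumr; apply: eq_bigr => i _; rewrite mulr_sumr.
by apply: eq_bigr => j _; rewrite mulr_sumr.
Qed.

Lemma sum3le F G : (forall i j k, F i j k <= G i j k) ->
  \sum_(i < N) \sum_(j < N) \sum_(k < d) F i j k <=
  \sum_(i < N) \sum_(j < N) \sum_(k < d) G i j k.
Proof.
move=> h; apply: ler_sum => i _; apply: ler_sum => j _; apply: ler_sum => k _.
exact: h.
Qed.

Lemma sumconst (c : R) : \sum_(l < N) c = N%:R * c.
Proof. by rewrite sumr_const card_ord mulr_natl. Qed.

Lemma E2 (w : 'I_N -> 'I_d -> R) :
  \sum_(i < N) \sum_(j < N) \sum_(k < d) \sum_(l < N) (w l k - w i k) ^+ 2 =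
  N%:R * \sum_(i < N) \sum_(j < N) \sum_(k < d) (w i k - w j k) ^+ 2.
Proof.
rewrite mulr_sumr; apply: eq_bigr => i _; rewrite sumconst; congr (_ * _).
rewrite exchange_big; apply: eq_bigr => l _; apply: eq_bigr => k _.
by rewrite -sqrrN opprB.
Qed.

Lemma E3 (w : 'I_N -> 'I_d -> R) :
  \sum_(i < N) \sum_(j < N) \sum_(k < d) \sum_(l < N) (w l k - w j k) ^+ 2 =
  N%:R * \sum_(i < N) \sum_(j < N) \sum_(k < d) (w i k - w j k) ^+ 2.
Proof.
rewrite sumconst; congr (_ * _); apply: eq_bigr => j _.
rewrite exchange_big; apply: eq_bigr => l _; apply: eq_bigr => k _.
by rewrite -sqrrN opprB.
Qed.

End Sums.

Lemma pxy (R : realType) (p x y : R) : 0 <= p <= 1 -> x * (p * y) <= 2^-1 * (x ^+ 2 + y ^+ 2).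
Proof.
case/andP=> h0 h1.
have e : 2^-1 * (x ^+ 2 + y ^+ 2) - x * (p * y) =
   2^-1 * ((1 - p) * (x ^+ 2 + y ^+ 2) + p * (x - y) ^+ 2) by field.
rewrite -subr_ge0 e; apply: mulr_ge0; first by rewrite invr_ge0.
apply: addr_ge0; apply: mulr_ge0; rewrite ?subr_ge0 ?sqr_ge0 //.
by rewrite addr_ge0 ?sqr_ge0.
Qed.

Lemma term_le (R : realType) (N d : nat) (c : R) (hc : 0 <= c)
  (psi : 'I_N -> 'I_N -> R) (hpsi : forall i l, 0 <= psi i l <= 1)
  (w : 'I_N -> 'I_d -> R) (x : R) i k :
  x * (c * \sum_(l < N) psi i l * (w l k - w i k)) <=
  c * (2^-1 * (N%:R * x ^+ 2 + \sum_(l < N) (w l k - w i k) ^+ 2)).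
Proof.
rewrite mulrCA; apply: ler_wpM2l => //.
rewrite -(@sumconst R N (x ^+ 2)) -big_split /= !mulr_sumr; apply: ler_sum => l _.
exact: pxy.
Qed.

Lemma key (R : realType) (N d : nat) (hN : (1 <= N)%N) (lambda : R)
  (hl : 0 < lambda)
  (psi : 'I_N -> 'I_N -> R) (hpsi : forall i l, 0 <= psi i l <= 1)
  (vt w : 'I_N -> 'I_d -> R) :
  2^-1 * \sum_(i < N) \sum_(j < N) \sum_(k < d)
      (2 * (vt i k - vt j k) *
        (lambda / N%:R * \sum_(l < N) psi i l * (w l k - w i k) -
         lambda / N%:R * \sum_(l < N) psi j l * (w l k - w j k)))
  <= 2 * lambda *
     (2^-1 * \sum_(i < N) \sum_(j < N) \sum_(k < d) (vt i k - vt j k) ^+ 2 +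
      2^-1 * \sum_(i < N) \sum_(j < N) \sum_(k < d) (w i k - w j k) ^+ 2).
Proof.
set c := lambda / N%:R.
have hc : 0 <= c by rewrite /c divr_ge0 // ltW.
have hN0 : N%:R != 0 :> R by rewrite pnatr_eq0 -lt0n.
set S0 := \sum_(i < N) \sum_(j < N) \sum_(k < d) (vt i k - vt j k) ^+ 2.
set S1 := \sum_(i < N) \sum_(j < N) \sum_(k < d) (w i k - w j k) ^+ 2.
rewrite -sum3Z.
apply: le_trans (@sum3le R N d _ (fun i j k =>
   c * (2^-1 * (N%:R * (vt i k - vt j k) ^+ 2 + \sum_(l < N) (w l k - w i k) ^+ 2)) +
   c * (2^-1 * (N%:R * (vt i k - vt j k) ^+ 2 + \sum_(l < N) (w l k - w j k) ^+ 2))) _) _.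
  move=> i j k.
  have -> : 2^-1 * (2 * (vt i k - vt j k) *
        (c * \sum_(l < N) psi i l * (w l k - w i k) -
         c * \sum_(l < N) psi j l * (w l k - w j k))) =
     (vt i k - vt j k) * (c * \sum_(l < N) psi i l * (w l k - w i k)) +
     (vt j k - vt i k) * (c * \sum_(l < N) psi j l * (w l k - w j k)).
    rewrite /c; field; by rewrite hN0.
  apply: lerD; first exact: term_le.
  by rewrite -(sqrrN (vt i k - vt j k)) opprB; exact: term_le.
rewrite sum3D !sum3Z !sum3D !sum3Z E2 E3 -/S0 -/S1 /c.
rewrite le_eqVlt; apply/orP; left; apply/eqP. field.
by rewrite hN0.
Qed.
Theorem lemma3p3 (R : realType) (N d : nat) (hN : (1 <= N)%N) (hd : (1 <= d)%N)
  (lambda tau : R) (hlambda : 0 < lambda) (htau : 0 < tau)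
  (psi : R -> R)
  (psi_pos : forall r : R, 0 <= r -> 0 < psi r)
  (psi_noninc : forall r s : R, 0 <= r -> r <= s -> psi s <= psi r)
  (psi_diff : forall r : R, 0 < r -> derivable psi r 1)
  (psi_diff0 : cvg ((fun h => h^-1 * (psi h - psi 0)) @ 0^'+))
  (psi_le1 : forall r : R, 0 <= r -> psi r <= 1)
  (x0 v0 x v : 'I_N -> 'I_d -> R -> R)
  (* initial data in C([-tau,0]) \cap C^1((-tau,0)) *)
  (x0_cont : forall i k, {within `[- tau, 0], continuous (x0 i k)})
  (v0_cont : forall i k, {within `[- tau, 0], continuous (v0 i k)})
  (x0_C1 : forall i k, (forall t : R, - tau < t < 0 -> derivable (x0 i k) t 1) /\
                       {in `]- tau, 0[, continuous (derive1 (x0 i k))})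
  (v0_C1 : forall i k, (forall t : R, - tau < t < 0 -> derivable (v0 i k) t 1) /\
                       {in `]- tau, 0[, continuous (derive1 (v0 i k))})
  (* the solution agrees with the initial data on [-tau,0] *)
  (x_init : forall i k (t : R), - tau <= t <= 0 -> x i k t = x0 i k t)
  (v_init : forall i k (t : R), - tau <= t <= 0 -> v i k t = v0 i k t)
  (* the solution is continuous on [-tau, oo) *)
  (x_cont : forall i k, {within `[- tau, +oo[, continuous (x i k)})
  (v_cont : forall i k, {within `[- tau, +oo[, continuous (v i k)})
  (* the delayed Cucker-Smale system for t > 0 *)
  (x_ode : forall i k (t : R), 0 < t -> is_derive t 1 (x i k) (v i k t))
  (v_ode : forall i k (t : R), 0 < t ->
     is_derive t 1 (v i k)
       (lambda / N%:R * \sum_(j < N)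
          psi (enorm (fun l => x i l (t - tau) - x j l (t - tau))) *
          (v j k (t - tau) - v i k (t - tau)))) :
  forall t : R, 0 < t ->
    derivable (Vfun v) t 1 /\
    derive1 (Vfun v) t <= 2 * lambda * (Vfun v t + Vfun v (t - tau)).
Proof.
move=> t ht.
have hD := @Vderiv R N d v _ t (fun i k => v_ode i k t ht).
split; first exact: (@ex_derive _ _ _ _ _ _ _ hD).
rewrite derive1E (@derive_val _ _ _ _ _ _ _ hD).
have hpsi : forall i l : 'I_N, 0 <= psi (enorm (fun l' => x i l' (t - tau) - x l l' (t - tau))) <= 1.
  move=> i l; have h0 : 0 <= enorm (fun l' => x i l' (t - tau) - x l l' (t - tau)).
    exact: sqrtr_ge0.
  by rewrite ltW ?psi_pos ?psi_le1.
exact: (@key R N d hN lambda hlambda _ hpsi (fun i k => v i k t) (fun i k => v i k (t - tau))).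
Qed.
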